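(* Let $c,m\in\mathbb{Z}_{\ge0}$. Let $\mathrm{Sym}$ act on $\mathbb{Z}^{(\mathbb{N}\times[c])}\oplus\mathbb{Z}^m$ by $\sigma(\mathbf{u},\mathbf{v})=(\sigma(\mathbf{u}),\mathbf{v})$. Then every $\mathrm{Sym}$-invariant lattice in $\mathbb{Z}^{(\mathbb{N}\times[c])}\oplus\mathbb{Z}^m$ has a finite equivariant Graver basis.
   Context: $\mathbb{N}=\{1,2,\dots\}$, $[c]=\{1,\dots,c\}$ (empty if $c=0$). $\mathbb{Z}^{(\mathbb{N}\times[c])}$ is the free abelian group with basis $\mathbb{N}\times[c]$ (standard basis $\mathbf{e}_{i,j}$); $\mathbb{Z}^{(\mathbb{N}\times[c])}\oplus\mathbb{Z}^m$ is viewed as the free abelian group on the disjoint union $(\mathbb{N}\times[c])\sqcup[m]$; a lattice is a subgroup. $\mathrm{Sym}$ is the group of permutations of $\mathbb{N}$ fixing all but finitely many points, acting on $\mathbb{Z}^{(\mathbb{N}\times[c])}$ by linear extension of $\sigma(\mathbf{e}_{i,j})=\mathbf{e}_{\sigma(i),j}$. $\mathbf{u}\sqsubseteq\mathbf{v}$ iff $u_kv_k\ge0$ and $|u_k|\le|v_k|$ for every coordinate $k$; the Graver basis of a lattice $L$ is the set of $\sqsubseteq$-minimal elements of $L\setminus\{\mathbf{0}\}$; $\mathcal{G}\subseteq L$ is an equivariant Graver basis if $\{\sigma(\mathbf{g})\mid\sigma\in\mathrm{Sym},\mathbf{g}\in\mathcal{G}\}$ is the Graver basis of $L$. *)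

(* Defs.v *)
From Stdlib Require List.
From mathcomp Require Import all_boot all_order all_algebra.
Set Implicit Arguments. Unset Strict Implicit. Unset Printing Implicit Defensive.
Import Order.TTheory GRing.Theory Num.Theory.
Local Open Scope ring_scope.

(* The index set N = {1,2,...} is encoded
   by nat = {0,1,2,...} via i |-> i+1 (shift by one).  A vector is a pair
   (u, v) with u : nat -> 'I_c -> int (required finitely supported) and
   v : 'I_m -> int. *)
Definition vec (c m : nat) : Type := ((nat -> 'I_c -> int) * ('I_m -> int))%type.

Definition fin_supp (c m : nat) (x : vec c m) : Prop :=
  exists N : nat, forall i : nat, (N <= i)%N -> forall j : 'I_c, x.1 i j = 0.

Definition vzero (c m : nat) : vec c m := (fun _ _ => 0, fun _ => 0).
Definition vadd (c m : nat) (x y : vec c m) : vec c m :=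
  (fun i j => x.1 i j + y.1 i j, fun k => x.2 k + y.2 k).
Definition vopp (c m : nat) (x : vec c m) : vec c m :=
  (fun i j => - x.1 i j, fun k => - x.2 k).

Definition lattice (c m : nat) (L : vec c m -> Prop) : Prop :=
  [/\ forall x, L x -> fin_supp x,
      L (vzero c m),
      forall x y, L x -> L y -> L (vadd x y)
    & forall x, L x -> L (vopp x)].

Record finperm := FinPerm {
  pfun : nat -> nat;
  pinv : nat -> nat;
  pfunK : cancel pfun pinv;
  pinvK : cancel pinv pfun;
  pfin : exists N : nat, forall i : nat, (N <= i)%N -> pfun i = i }.

(* sigma (u, v) = (sigma u, v), where sigma e_{i,j} = e_{sigma i, j};
   hence (sigma u)_{i,j} = u_{sigma^-1 i, j}. *)
Definition act (c m : nat) (s : finperm) (x : vec c m) : vec c m :=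
  (fun i j => x.1 (pinv s i) j, x.2).

Definition sym_invariant (c m : nat) (L : vec c m -> Prop) : Prop :=
  forall (s : finperm) (x : vec c m), L x -> L (act s x).

Definition coord_le (a b : int) : Prop := 0 <= a * b /\ `|a| <= `|b|.

Definition sqle (c m : nat) (x y : vec c m) : Prop :=
  (forall i j, coord_le (x.1 i j) (y.1 i j)) /\ (forall k, coord_le (x.2 k) (y.2 k)).

Definition graver_elem (c m : nat) (L : vec c m -> Prop) (g : vec c m) : Prop :=
  [/\ L g, g <> vzero c m &
      forall h, L h -> h <> vzero c m -> sqle h g -> h = g].

Definition equivariant_graver (c m : nat) (L : vec c m -> Prop) (G : seq (vec c m)) : Prop :=
  (forall g, List.In g G -> L g) /\
  (forall x, graver_elem L x <-> exists s : finperm, exists2 g, List.In g G & x = act s g).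

(* Main.v *)
Require Import Defs.
From mathcomp Require Import all_boot all_order all_algebra zify.
From Stdlib Require Import ClassicalEpsilon Classical FunctionalExtensionality.
Set Implicit Arguments. Unset Strict Implicit. Unset Printing Implicit Defensive.

Definition good T (R : T -> T -> Prop) (f : nat -> T) :=
  exists i j, (i < j)%N /\ R (f i) (f j).
Definition wqo T (R : T -> T -> Prop) := forall f : nat -> T, good R f.
Definition trans T (R : T -> T -> Prop) := forall x y z, R x y -> R y z -> R x z.

Lemma incr_lt (phi : nat -> nat) : (forall n, phi n < phi n.+1) ->
  forall i j, i < j -> phi i < phi j.
Proof.
move=> H i j; elim: j => // j IH; rewrite ltnS leq_eqVlt => /orP[/eqP->//|/IH h].
exact: ltn_trans h (H j).
Qed.

Lemma cid' (A : Type) (P : A -> Prop) : (exists x, P x) -> {x | P x}.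
Proof. exact: constructive_indefinite_description. Qed.

Lemma asc T (R : T -> T -> Prop) : wqo R -> trans R -> forall f : nat -> T,
  exists phi : nat -> nat, (forall n, phi n < phi n.+1) /\
    forall i j, i < j -> R (f (phi i)) (f (phi j)).
Proof.
move=> W Tr f.
case: (classic (exists N, forall i, N <= i -> exists j, i < j /\ R (f i) (f j))).
- case=> N HN.
  have H' : forall i, exists j, N <= i -> i < j /\ R (f i) (f j).
    move=> i; case: (leqP N i) => hi.
      by case: (HN i hi) => j hj; exists j.
    by exists 0.
  pose nxt i := proj1_sig (cid' (H' i)).
  have Hn i : N <= i -> i < nxt i /\ R (f i) (f (nxt i)).
    by rewrite /nxt; case: (cid' (H' i)).
  pose phi n := iter n nxt N.
  have Hge n : N <= phi n.
    elim: n => //= n IH; exact: leq_trans IH (ltnW (Hn _ IH).1).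
  have Hs n : phi n < phi n.+1 by exact: (Hn _ (Hge n)).1.
  exists phi; split => // i j; elim: j => // j IH.
  rewrite ltnS leq_eqVlt => /orP[/eqP->|/IH h]; first exact: (Hn _ (Hge j)).2.
  exact: Tr h (Hn _ (Hge j)).2.
- move=> Hno.
  have H' : forall N, exists i, N <= i /\ forall j, i < j -> ~ R (f i) (f j).
    move=> N; apply: NNPP => hn; apply: Hno; exists N => i hi.
    apply: NNPP => hj; apply: hn; exists i; split => // j ij hR.
    by apply: hj; exists j.
  pose t N := proj1_sig (cid' (H' N)).
  have Ht N : N <= t N /\ forall j, t N < j -> ~ R (f (t N)) (f j).
    by rewrite /t; case: (cid' (H' N)).
  pose psi n := iter n (fun k => t k.+1) (t 0).
  have Hs n : psi n < psi n.+1 by exact: (Ht _).1.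
  have Hp n : exists N, psi n = t N by case: n => [|n]; [exists 0|exists (psi n).+1].
  case: (W (fun n => f (psi n))) => i [j [ij hR]].
  case: (Hp i) => N e; have := (Ht N).2 (psi j); rewrite -e.
  by move=> h; exfalso; apply: (h (incr_lt Hs ij)).
Qed.

Lemma wqo_pull T1 T2 (R1 : T1 -> T1 -> Prop) (R2 : T2 -> T2 -> Prop) (g : T1 -> T2) :
  wqo R2 -> (forall x y, R2 (g x) (g y) -> R1 x y) -> wqo R1.
Proof. move=> W H f; case: (W (fun n => g (f n))) => i [j [ij h]]; exists i, j; auto. Qed.

Lemma wqo_prod T1 T2 (R1 : T1 -> T1 -> Prop) (R2 : T2 -> T2 -> Prop) :
  wqo R1 -> trans R1 -> wqo R2 -> wqo (fun x y : T1 * T2 => R1 x.1 y.1 /\ R2 x.2 y.2).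
Proof.
move=> W1 T W2 f; case: (asc W1 T (fun n => (f n).1)) => phi [Hs Hr].
case: (W2 (fun n => (f (phi n)).2)) => i [j [ij h]].
exists (phi i), (phi j); split; [exact: incr_lt|split => //]; exact: Hr.
Qed.

Lemma wqo_nat : wqo (fun m n : nat => m <= n).
Proof.
move=> f.
suff H : forall v i, f i <= v -> good (fun m n : nat => m <= n) f by exact: (H _ 0 (leqnn _)).
elim=> [|v IH] i hi.
  by exists i, i.+1; split => //; rewrite (leq_trans hi).
case: (leqP (f i) (f i.+1)) => h; first by exists i, i.+1.
by apply: (IH i.+1); rewrite -ltnS (leq_trans h).
Qed.

Lemma wqo_bool : wqo (fun a b : bool => a = b).
Proof.
move=> f; case E0: (f 0); case E1: (f 1); case E2: (f 2);
  try (by exists 0, 1; rewrite E0 E1); try (by exists 0, 2; rewrite E0 E2);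
  by exists 1, 2; rewrite E1 E2.
Qed.
Import Order.TTheory GRing.Theory Num.Theory.

Lemma coord_le_iff (a b : int) : coord_le a b <->
  (((0 <= a) && (a <= b)) || ((b <= a) && (a <= 0)))%R.
Proof. rewrite /coord_le; split; [case=> *; nia | move=> H; split; nia]. Qed.

Lemma coord_le_trans : trans coord_le.
Proof. move=> x y z; rewrite !coord_le_iff => *; lia. Qed.

Lemma coord_le0 (b : int) : coord_le 0 b.
Proof. rewrite coord_le_iff; lia. Qed.

Lemma wqo_int : wqo coord_le.
Proof.
have Tb : trans (fun a b : bool => a = b) by move=> x y z -> ->.
apply: (@wqo_pull _ _ coord_le _ (fun a : int => ((0 <= a)%R, absz a))
  (wqo_prod wqo_bool Tb wqo_nat)).
move=> x y /= [h1 h2]; rewrite coord_le_iff; move: h1 h2.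
case: (boolP (0 <= x)%R); case: (boolP (0 <= y)%R) => // *; lia.
Qed.

Definition pw (I : eqType) T (R : T -> T -> Prop) (s : seq I) (x y : I -> T) :=
  forall j, j \in s -> R (x j) (y j).

Lemma pw_trans (I : eqType) T (R : T -> T -> Prop) s : trans R -> trans (@pw I T R s).
Proof. move=> Tr x y z h1 h2 j js; exact: Tr (h1 j js) (h2 j js). Qed.

Lemma wqo_pw (I : eqType) T (R : T -> T -> Prop) s : wqo R -> trans R -> wqo (@pw I T R s).
Proof.
move=> W Tr; elim: s => [|j s IH].
  by move=> f; exists 0, 1; split => // j.
apply: (@wqo_pull _ _ (pw R (j :: s)) _ (fun x : I -> T => (x j, x)) (wqo_prod W Tr IH)).
move=> x y /= [h1 h2] k; rewrite in_cons => /orP[/eqP->//|]; exact: h2.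
Qed.

Section Higman.
Variables (T : Type) (R : T -> T -> Prop).

Inductive emb : seq T -> seq T -> Prop :=
| emb_nil l : emb [::] l
| emb_skip l1 b l2 : emb l1 l2 -> emb l1 (b :: l2)
| emb_cons a l1 b l2 : R a b -> emb l1 l2 -> emb (a :: l1) (b :: l2).

Lemma emb_idx d l1 l2 : emb l1 l2 -> exists h : nat -> nat,
  (forall i, i < size l1 -> h i < size l2 /\ R (nth d l1 i) (nth d l2 (h i))) /\
  (forall i j, i < j -> j < size l1 -> h i < h j).
Proof.
elim=> {l1 l2} [l|l1 b l2 _ [h [H1 H2]]|a l1 b l2 hab _ [h [H1 H2]]].
- by exists id; split.
- exists (fun i => (h i).+1); split.
    by move=> i /H1 [/= ? ?]; split.
  by move=> i j ij js; rewrite ltnS; apply: H2.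
- exists (fun i => if i is i'.+1 then (h i').+1 else 0); split.
    by case=> [|i] //= /H1 [? ?]; split.
  case=> [|i] [|j] //= ij js; rewrite ltnS; exact: H2.
Qed.

Hypotheses (W : wqo R) (Tr : trans R).

Definition bad (f : nat -> seq T) := ~ good emb f.
Definition ext (p : seq (seq T)) :=
  exists f, bad f /\ forall i, i < size p -> f i = nth [::] p i.
Definition minw p w := ext (rcons p w) /\ forall w', ext (rcons p w') -> size w <= size w'.
Definition step p := epsilon (inhabits [::]) (minw p).
Definition pre n := iter n (fun p => rcons p (step p)) [::].
Definition M n := step (pre n).

Lemma preE n : pre n = map M (iota 0 n).
Proof.
elim: n => // n IH; rewrite -addn1 iotaD map_cat cats1 add0n -IH addn1; reflexivity.
Qed.

Lemma min_ex p w : ext (rcons p w) -> exists w0, minw p w0.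
Proof.
suff H : forall n w, size w <= n -> ext (rcons p w) -> exists w0, minw p w0.
  exact: H (leqnn _).
elim=> [|n IH] w0 hw he.
- case: (classic (exists w', ext (rcons p w') /\ size w' < size w0)) => [[w' [h1 h2]]|hn].
    by move: (leq_trans h2 hw).
  exists w0; split => // w' h; rewrite leqNgt; apply/negP => hl; apply: hn; by exists w'.
- case: (classic (exists w', ext (rcons p w') /\ size w' < size w0)) => [[w' [h1 h2]]|hn].
    apply: (IH w') => //; by rewrite -ltnS (leq_trans h2 hw).
  exists w0; split => // w' h; rewrite leqNgt; apply/negP => hl; apply: hn; by exists w'.
Qed.

Lemma pre_spec n : (exists f, bad f) -> minw (pre n) (M n).
Proof.
move=> [f0 bf0].
have E : forall k, ext (pre k).
  elim=> [|k IH]; first by exists f0; split.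
  case: (IH) => f [bf hf].
  have : ext (rcons (pre k) (f k)).
    exists f; split => // i; rewrite size_rcons ltnS nth_rcons leq_eqVlt.
    have -> : size (pre k) = k by rewrite preE size_map size_iota.
    case/orP => [/eqP->|ik]; first by rewrite ltnn eqxx.
    by rewrite ik hf // preE size_map size_iota.
  case/min_ex => w0 hw0.
  by case: (epsilon_spec (inhabits [::]) (minw (pre k)) (ex_intro _ w0 hw0)).
case: (E n) => f [bf hf].
have : ext (rcons (pre n) (f n)).
  exists f; split => // i; rewrite size_rcons ltnS nth_rcons leq_eqVlt.
  have -> : size (pre n) = n by rewrite preE size_map size_iota.
  case/orP => [/eqP->|ik]; first by rewrite ltnn eqxx.
  by rewrite ik hf // preE size_map size_iota.
case/min_ex => w0 hw0.
exact: (epsilon_spec (inhabits [::]) (minw (pre n)) (ex_intro _ w0 hw0)).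
Qed.

Lemma higman : wqo emb.
Proof.
move=> f0; apply: NNPP => bf0.
have Hex : exists f, bad f by exists f0.
have Mbad : bad M.
  move=> [i [j [ij h]]].
  case: (pre_spec j Hex) => [[f [bf hf]] _]; apply: bf.
  have e : rcons (pre j) (M j) = map M (iota 0 j.+1) by rewrite -preE.
  rewrite e size_map size_iota in hf.
  exists i, j; split => //.
  have Hk : forall k, k < j.+1 -> f k = M k.
    by move=> k hk; rewrite hf // (nth_map 0) ?size_iota // nth_iota.
  by rewrite !Hk // ltnW.
have Mmin : forall n f, bad f -> (forall k, k < n -> f k = M k) -> size (M n) <= size (f n).
  move=> n f bf hf; case: (pre_spec n Hex) => _; apply.
  exists f; split => // i; rewrite size_rcons ltnS nth_rcons leq_eqVlt.
  have -> : size (pre n) = n by rewrite preE size_map size_iota.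
  case/orP => [/eqP->|ik]; first by rewrite ltnn eqxx.
  by rewrite ik preE hf // (nth_map 0) ?size_iota // nth_iota.
have Mne : forall n, M n <> [::].
  move=> n e; apply: Mbad; exists n, n.+1; split => //; rewrite e; exact: emb_nil.
case E0 : (M 0) => [|x0 l0]; first by exact: Mne E0.
pose a n := head x0 (M n); pose v n := behead (M n).
have Mv : forall n, M n = a n :: v n.
  by move=> n; rewrite /a /v; case E: (M n) => [|y l] //; exfalso; exact: Mne E.
case: (asc W Tr a) => phi [Hs Hr].
have phi0 : forall k, phi 0 <= phi k.
  by case=> // k; apply: ltnW; apply: incr_lt.
pose g k := if k < phi 0 then M k else v (phi (k - phi 0)).
have := Mmin (phi 0) g.
rewrite /g ltnn subnn Mv /= ltnn => H.
have : bad g.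
  move=> [i [j [ij h]]]; apply: Mbad; move: h; rewrite /g.
  case: (ltnP i (phi 0)) => hi; case: (ltnP j (phi 0)) => hj.
  - by move=> h; exists i, j.
  - move=> h; exists i, (phi (j - phi 0)); split; first exact: leq_trans hi (phi0 _).
    rewrite (Mv (phi _)); exact: emb_skip.
  - by move: (leq_ltn_trans hi (ltn_trans ij hj)); rewrite ltnn.
  - move=> h; exists (phi (i - phi 0)), (phi (j - phi 0)).
    have pq : i - phi 0 < j - phi 0 by lia.
    split; first exact: incr_lt.
    rewrite !Mv; apply: emb_cons => //; exact: Hr.
move=> bg; have := H bg (fun k hk => ltac:(by rewrite hk)).
by [].
Qed.

End Higman.

Definition tpf (a b x : nat) := if x == a then b else if x == b then a else x.
Lemma tpfK a b : cancel (tpf a b) (tpf a b).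
Proof.
move=> x; rewrite /tpf; case: (eqVneq x a) => [->|xa].
  by rewrite eqxx; case: (eqVneq b a) => [->|ba] //; rewrite eqxx.
case: (eqVneq x b) => [->|xb]; first by rewrite eqxx.
by rewrite (negbTE xa) (negbTE xb).
Qed.
Lemma tpfin a b : exists N, forall i, N <= i -> tpf a b i = i.
Proof.
exists (maxn a b).+1 => i hi; rewrite /tpf.
have -> : (i == a) = false by apply/eqP; lia.
have -> : (i == b) = false by apply/eqP; lia.
by [].
Qed.
Definition tp a b := FinPerm (tpfK a b) (tpfK a b) (tpfin a b).

Section Comp.
Variables s t : finperm.
Lemma compK : cancel (pfun s \o pfun t) (pinv t \o pinv s).
Proof. by move=> x /=; rewrite pfunK pfunK. Qed.
Lemma compKV : cancel (pinv t \o pinv s) (pfun s \o pfun t).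
Proof. by move=> x /=; rewrite pinvK pinvK. Qed.
Lemma compfin : exists N, forall i, N <= i -> (pfun s \o pfun t) i = i.
Proof.
case: (pfin s) => Ns hs; case: (pfin t) => Nt ht; exists (maxn Ns Nt) => i hi /=.
rewrite ht ?hs //; lia.
Qed.
Definition comp := FinPerm compK compKV compfin.
Lemma invfin : exists N, forall i, N <= i -> pinv s i = i.
Proof.
case: (pfin s) => N hN; exists N => i hi; by rewrite -{1}(hN i hi) pfunK.
Qed.
Definition invp := FinPerm (pinvK s) (pfunK s) invfin.
End Comp.

Definition idp := @FinPerm id id (fun _ => erefl) (fun _ => erefl) (ex_intro _ 0 (fun _ _ => erefl)).

Fixpoint sig (h : nat -> nat) n := if n is n'.+1 then comp (sig h n') (tp n' (h n')) else idp.

Lemma sigA h n z : (forall k, k < n -> z != k /\ z != h k) -> pfun (sig h n) z = z.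
Proof.
elim: n => //= n IH H; rewrite /tpf.
case: (H n (ltnSn n)) => /negbTE -> /negbTE ->; apply: IH => k hk; apply: H; lia.
Qed.

Lemma sigB h N : (forall i j, i < j -> j < N -> h i < h j) ->
  forall n, n <= N -> forall i, i < n -> pfun (sig h n) i = h i.
Proof.
move=> Hm.
have Hge : forall i, i < N -> i <= h i.
  elim=> // i IH hi; have := Hm i i.+1 (ltnSn i) hi; have := IH (ltnW hi); lia.
elim=> // n IH hn i; rewrite ltnS leq_eqVlt => /orP[/eqP->|hi] /=; rewrite /tpf.
- rewrite eqxx; apply: sigA => k hk; split.
    have := Hge n hn; lia.
  have := Hm k n hk hn; lia.
- have hne : i != n by lia.
  have hne2 : i != h n by have := Hge n hn; lia.
  rewrite (negbTE hne) (negbTE hne2); apply: IH => //; exact: ltnW.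
Qed.

Lemma key c m (f : nat -> vec c m) : (forall n, fin_supp (f n)) ->
  exists i j, i < j /\ exists s, sqle (act s (f i)) (f j).
Proof.
move=> Hf.
pose Nn n := proj1_sig (cid' (Hf n)).
have HN n : forall i, Nn n <= i -> forall j, (f n).1 i j = 0%R.
  by rewrite /Nn; case: (cid' (Hf n)).
have W := wqo_prod (wqo_pw (enum 'I_m) wqo_int coord_le_trans)
   (pw_trans (s := enum 'I_m) coord_le_trans)
   (higman (wqo_pw (enum 'I_c) wqo_int coord_le_trans) (pw_trans (s := enum 'I_c) coord_le_trans)).
case: (W (fun n => ((f n).2, map (f n).1 (iota 0 (Nn n))))) => i [j [ij [/= hv he]]].
exists i, j; split => //.
case: (emb_idx (fun _ => 0%R) he) => h [H1 H2]; rewrite size_map size_iota in H1 H2.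
exists (sig h (Nn i)); split => /=; last by move=> k; apply: hv; rewrite mem_enum.
move=> k jj; set i' := pinv _ k.
case: (ltnP i' (Nn i)) => hi'; last by rewrite HN //; exact: coord_le0.
have ek : h i' = k.
  by rewrite -(sigB H2 (leqnn _) hi') /i' pinvK.
case: (H1 i' hi'); rewrite size_map size_iota => hl.
rewrite (nth_map 0) ?size_iota // nth_iota // (nth_map 0) ?size_iota // nth_iota // !add0n ek.
by move=> hR; apply: hR; rewrite mem_enum.
Qed.

Lemma act_invK c m (s : finperm) (x : vec c m) : act s (act (invp s) x) = x.
Proof.
case: x => u v; rewrite /act /=; congr pair.
by apply: functional_extensionality => i; rewrite pinvK.
Qed.

Lemma act_Kinv c m (s : finperm) (x : vec c m) : act (invp s) (act s x) = x.
Proof.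
case: x => u v; rewrite /act /=; congr pair.
by apply: functional_extensionality => i; rewrite pfunK.
Qed.

Lemma act_nz c m (s : finperm) (x : vec c m) : x <> vzero c m -> act s x <> vzero c m.
Proof. by move=> h e; apply: h; rewrite -(act_Kinv s x) e. Qed.

Lemma graver_act c m (L : vec c m -> Prop) (s : finperm) g :
  sym_invariant L -> graver_elem L g -> graver_elem L (act s g).
Proof.
move=> Hinv [hL h0 hmin]; split; [exact: Hinv | exact: act_nz |].
move=> h hh h0' hle.
have e : act (invp s) h = g.
  apply: hmin; [exact: Hinv | exact: act_nz |]; split.
    by move=> i j; have := hle.1 (pfun s i) j; rewrite /= pfunK.
  exact: hle.2.
by rewrite -e act_invK.
Qed.

Definition inG c m (G : seq (vec c m)) x :=
  exists s : finperm, exists2 g, List.In g G & x = act s g.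

Theorem lemma5p12 (c m : nat) (L : vec c m -> Prop) :
  lattice L -> sym_invariant L ->
  exists G : seq (vec c m), equivariant_graver L G.
Proof.
move=> HL Hinv; apply: NNPP => hno.
have Hstep : forall G : seq (vec c m), (forall g, List.In g G -> graver_elem L g) ->
    exists x, graver_elem L x /\ ~ inG G x.
  move=> G HG; apply: NNPP => hn; apply: hno; exists G; split.
    by move=> g /HG [].
  move=> x; split.
    by move=> hx; apply: NNPP => hni; apply: hn; exists x.
  by case=> s [g gG ->]; apply: graver_act => //; apply: HG.
pose P G x := graver_elem L x /\ ~ inG G x.
pose nextG G := epsilon (inhabits (vzero c m)) (P G).
pose seqG n := iter n (fun G => nextG G :: G) [::].
pose f n := nextG (seqG n).
have HS : forall n g, List.In g (seqG n) -> graver_elem L g.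
  elim=> // n IH g /= [<-|]; last exact: IH.
  by case: (epsilon_spec (inhabits (vzero c m)) (P (seqG n)) (Hstep _ (IH))).
have Hf n : P (seqG n) (f n) := epsilon_spec (inhabits (vzero c m)) (P (seqG n)) (Hstep _ (HS n)).
have Hin : forall i j, i < j -> List.In (f i) (seqG j).
  move=> i; elim=> // j IH; rewrite ltnS leq_eqVlt => /orP[/eqP->|/IH h]; [left|right] => //.
case: HL => Hfs _ _ _.
have HLf n : L (f n) by case: (Hf n) => [[]].
have [i [j [ij [s hle]]]] := key (fun n => Hfs _ (HLf n)).
case: (Hf j) => [[_ _ hmin] hni]; apply: hni.
exists s, (f i); first exact: Hin.
case: (Hf i) => [[hL h0 _] _].
symmetry; apply: hmin => //; [exact: Hinv | exact: act_nz].
Qed.
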